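(* Suppose the joint distribution of $(Y,X,W_1)$ is known, $\operatorname{cov}(W_1,X)\ne0$, and $\beta_{\text{med}}\ge 0$. Let $\mathcal B_I(\bar r_X)=\mathcal B_I(\bar r_X,0,1)$ and $\bar r_X^{\text{bp}}=\inf\{\bar r_X\ge0: b\in\mathcal B_I(\bar r_X)\text{ for some } b\le 0\}$. Then $$\bar r_X^{\text{bp}}=\left(\frac{R^2_{Y\sim X\bullet W_1}}{\frac{R^2_{X\sim W_1}}{1-R^2_{X\sim W_1}}+R^2_{Y\sim X\bullet W_1}}\right)^{1/2},$$ where $R^2_{Y\sim X\bullet W_1}=\beta_{\text{med}}^2\operatorname{var}(X^{\perp W_1})/\operatorname{var}(Y^{\perp W_1})$.
   Context: Let $(Y,X,W_1,W_2)$ be a random vector with finite second moments, $Y,X\in\mathbb R$, $W_1\in\mathbb R^{d_1}$, $W_2\in\mathbb R$. For random vectors $A,B$ with $\operatorname{var}(B)$ invertible, $A^{\perp B}=A-\operatorname{cov}(A,B)\operatorname{var}(B)^{-1}B$. $\beta_{\text{long}},\gamma_1,\gamma_2$ are the coefficients on $X,W_1,W_2$ in the linear projection of $Y$ on $(1,X,W_1,W_2)$; $\pi_1,\pi_2$ the coefficients on $W_1,W_2$ in the linear projection of $X$ on $(1,W_1,W_2)$; $\beta_{\text{med}}$ the coefficient on $X$ in the linear projection of $Y$ on $(1,X,W_1)$. $\Sigma_{\text{obs}}=\operatorname{var}(W_1)$, $c=\operatorname{cov}(W_1,W_2)$, $R_{W_2\sim W_1}=\sqrt{c'\Sigma_{\text{obs}}^{-1}c/\operatorname{var}(W_2)}$.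 $R^2_{X\sim W_1}$ is the population $R^2$ of the projection of $X$ on $(1,W_1)$. Assumptions: (A1) $\operatorname{var}(Y,X,W_1,W_2)$ positive definite; (A-rx) $\sqrt{\operatorname{var}(\pi_2W_2)}\le\bar r_X\sqrt{\operatorname{var}(\pi_1'W_1)}$; (A-c) $R_{W_2\sim W_1}\in[\underline c,\bar c]$. $\mathcal B_I(\bar r_X,\underline c,\bar c)$ is the set of $b\in\mathbb R$ for which there exists a random vector $(\tilde Y,\tilde X,\tilde W_1,\tilde W_2)$ with $(\tilde Y,\tilde X,\tilde W_1)$ equal in distribution to $(Y,X,W_1)$, $\tilde W_2$ scalar with $\operatorname{var}(\tilde W_2)=1$, satisfying (A1), (A-rx), (A-c), and whose $\beta_{\text{long}}$ equals $b$. *)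

(* Defs.v *)
From HB Require Import structures.
From mathcomp Require Import all_boot all_order all_algebra.
From mathcomp Require Import classical_sets reals constructive_ereal ereal.
Set Implicit Arguments. Unset Strict Implicit. Unset Printing Implicit Defensive.
Import Order.TTheory GRing.Theory Num.Theory.
Local Open Scope ring_scope.

(* Everything in the statement depends only on second moments, so a random
   vector is represented by its (population) covariance matrix.
   Observed vector (Y, X, W1) has dimension n.+2 with coordinates
     0 = Y, 1 = X, 2..n+1 = W1 (W1 in R^n).
   Full vector (Y, X, W1, W2) has dimension n.+3, the last coordinate is W2. *)

Section Moments.
Variable R : realType.

Definition posdef k (M : 'M[R]_k) : Prop :=
  M^T = M /\ forall v : 'rV[R]_k, v != 0 -> 0 < (v *m M *m v^T) 0 0.

(* coefficients on the regressors V_(f a) in the linear projection of V_i on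
   (1, V_(f 0), ..., V_(f (m-1))):  var(Z)^{-1} cov(Z, V_i) *)
Definition lpcoef k m (M : 'M[R]_k) (f : 'I_m -> 'I_k) (i : 'I_k) : 'cV[R]_m :=
  invmx (mxsub f f M) *m mxsub f (fun _ : 'I_1 => i) M.

Definition explvar k m (M : 'M[R]_k) (f : 'I_m -> 'I_k) (i : 'I_k) : R :=
  (mxsub (fun _ : 'I_1 => i) f M *m invmx (mxsub f f M)
     *m mxsub f (fun _ : 'I_1 => i) M) 0 0.

Definition resvar k m (M : 'M[R]_k) (f : 'I_m -> 'I_k) (i : 'I_k) : R :=
  M i i - explvar M f i.

Definition rsq k m (M : 'M[R]_k) (f : 'I_m -> 'I_k) (i : 'I_k) : R :=
  explvar M f i / M i i.

Variable n : nat.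

Definition oY : 'I_n.+2 := ord0.
Definition oX : 'I_n.+2 := lift ord0 ord0.
Definition oW (j : 'I_n) : 'I_n.+2 := lift ord0 (lift ord0 j).
Definition oXW (a : 'I_n.+1) : 'I_n.+2 := lift ord0 a.

Definition ext (i : 'I_n.+2) : 'I_n.+3 := widen_ord (leqnSn n.+2) i.
Definition eW2 : 'I_n.+3 := ord_max.
Definition eXWW (a : 'I_n.+2) : 'I_n.+3 := lift ord0 a.
(* regressors (W1, W2): positions 0..n-1 = W1, position n = W2 *)
Definition eWW (a : 'I_n.+1) : 'I_n.+3 := lift ord0 (lift ord0 a).
Definition eW (j : 'I_n) : 'I_n.+3 := ext (oW j).

Definition beta_med (S : 'M[R]_n.+2) : R := lpcoef S oXW oY ord0 0.

Definition beta_long (St : 'M[R]_n.+3) : R := lpcoef St eXWW (ext oY) ord0 0.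

Definition pi1 (St : 'M[R]_n.+3) : 'cV[R]_n :=
  \col_j (lpcoef St eWW (ext oX) (widen_ord (leqnSn n) j) 0).
Definition pi2 (St : 'M[R]_n.+3) : R := lpcoef St eWW (ext oX) ord_max 0.

Definition A_rx (St : 'M[R]_n.+3) (rx : R) : Prop :=
  Num.sqrt (pi2 St ^+ 2 * St eW2 eW2)
  <= rx * Num.sqrt (((pi1 St)^T *m mxsub eW eW St *m pi1 St) 0 0).

Definition R_W2W1 (St : 'M[R]_n.+3) : R :=
  let c := mxsub eW (fun _ : 'I_1 => eW2) St in
  Num.sqrt ((c^T *m invmx (mxsub eW eW St) *m c) 0 0 / St eW2 eW2).

Definition A_c (St : 'M[R]_n.+3) (cl cu : R) : Prop :=
  cl <= R_W2W1 St <= cu.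

Definition B_I (S : 'M[R]_n.+2) (rx cl cu : R) : set R :=
  [set b | exists St : 'M[R]_n.+3,
     (forall i j : 'I_n.+2, St (ext i) (ext j) = S i j) /\
     St eW2 eW2 = 1 /\
     posdef St /\ A_rx St rx /\ A_c St cl cu /\
     beta_long St = b].

(* breakdown point  inf { rx >= 0 : exists b <= 0, b \in B_I(rx, 0, 1) }
   (as an extended real; inf of the empty set is +oo) *)
Definition rx_bp (S : 'M[R]_n.+2) : \bar R :=
  ereal_inf [set r%:E | r in [set r : R | 0 <= r /\
                          exists b : R, b <= 0 /\ B_I S r 0 1 b]].

Definition R2_X_W1 (S : 'M[R]_n.+2) : R := rsq S oW oX.

Definition R2_Y_X_W1 (S : 'M[R]_n.+2) : R :=
  beta_med S ^+ 2 * resvar S oW oX / resvar S oW oY.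

End Moments.

(* Main.v *)
Require Import Defs.
From HB Require Import structures.
From mathcomp Require Import all_boot all_order all_algebra.
From mathcomp Require Import classical_sets reals constructive_ereal ereal.
From mathcomp Require Import ring lra.
Set Implicit Arguments. Unset Strict Implicit. Unset Printing Implicit Defensive.
Import Order.TTheory GRing.Theory Num.Theory.
Local Open Scope ring_scope.

Section IP.
Variable R : realType.

Definition ip k (M : 'M[R]_k) (u v : 'rV[R]_k) : R := (u *m M *m v^T) 0 0.
Definition ev k (i : 'I_k) : 'rV[R]_k := delta_mx 0 i.
Definition comb k m (f : 'I_m -> 'I_k) (c : 'I_m -> R) : 'rV[R]_k :=
  \sum_a c a *: ev (f a).
Arguments ev {k}.

Variable k : nat.
Variable M : 'M[R]_k.

Lemma ipDl u u' v : ip M (u + u') v = ip M u v + ip M u' v.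
Proof. by rewrite /ip !mulmxDl mxE. Qed.
Lemma ipDr u v v' : ip M u (v + v') = ip M u v + ip M u v'.
Proof. by rewrite /ip linearD /= mulmxDr mxE. Qed.
Lemma ipZl a u v : ip M (a *: u) v = a * ip M u v.
Proof. by rewrite /ip -!scalemxAl mxE. Qed.
Lemma ipZr a u v : ip M u (a *: v) = a * ip M u v.
Proof. by rewrite /ip linearZ /= -scalemxAr mxE. Qed.
Lemma ipNl u v : ip M (- u) v = - ip M u v.
Proof. by rewrite -scaleN1r ipZl mulN1r. Qed.
Lemma ipNr u v : ip M u (- v) = - ip M u v.
Proof. by rewrite -scaleN1r ipZr mulN1r. Qed.
Lemma ipBl u u' v : ip M (u - u') v = ip M u v - ip M u' v.
Proof. by rewrite ipDl ipNl. Qed.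
Lemma ipBr u v v' : ip M u (v - v') = ip M u v - ip M u v'.
Proof. by rewrite ipDr ipNr. Qed.
Lemma ip0l v : ip M 0 v = 0.
Proof. by rewrite /ip !mul0mx mxE. Qed.
Lemma ip0r v : ip M v 0 = 0.
Proof. by rewrite /ip trmx0 mulmx0 mxE. Qed.
Lemma ip_suml I (r : seq I) (P : pred I) (F : I -> 'rV_k) v :
  ip M (\sum_(i <- r | P i) F i) v = \sum_(i <- r | P i) ip M (F i) v.
Proof.
elim/big_rec2: _ => [|i y u Pi <-]; first exact: ip0l.
by rewrite ipDl.
Qed.
Lemma ip_sumr I (r : seq I) (P : pred I) (F : I -> 'rV_k) v :
  ip M v (\sum_(i <- r | P i) F i) = \sum_(i <- r | P i) ip M v (F i).
Proof.
elim/big_rec2: _ => [|i y u Pi <-]; first exact: ip0r.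
by rewrite ipDr.
Qed.
Lemma ip_ee i j : ip M (ev i) (ev j) = M i j.
Proof.
by rewrite /ip /ev trmx_delta -(rowE i M) -(colE j) !mxE.
Qed.

Lemma ip_sym : M^T = M -> forall u v, ip M u v = ip M v u.
Proof.
move=> hM u v; rewrite /ip.
have e : (v *m M *m u^T) 0 0 = ((v *m M *m u^T)^T) 0 0.
  by rewrite [in RHS]mxE.
rewrite e. rewrite !trmx_mul trmxK hM mulmxA. done.
Qed.

Lemma ip_combl m (f : 'I_m -> 'I_k) c v :
  ip M (comb f c) v = \sum_a c a * ip M (ev (f a)) v.
Proof. by rewrite ip_suml; apply: eq_bigr => a _; rewrite ipZl. Qed.
Lemma ip_combr m (f : 'I_m -> 'I_k) c v :
  ip M v (comb f c) = \sum_a c a * ip M v (ev (f a)).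
Proof. by rewrite ip_sumr; apply: eq_bigr => a _; rewrite ipZr. Qed.

Lemma orth_comb m (f : 'I_m -> 'I_k) c v :
  (forall a, ip M v (ev (f a)) = 0) -> ip M v (comb f c) = 0.
Proof. by move=> h; rewrite ip_combr big1 // => a _; rewrite h mulr0. Qed.
Lemma orth_combl m (f : 'I_m -> 'I_k) c v :
  (forall a, ip M v (ev (f a)) = 0) -> M^T = M -> ip M (comb f c) v = 0.
Proof. by move=> h hs; rewrite ip_sym // orth_comb. Qed.

Lemma quad_sub m (f : 'I_m -> 'I_k) (x : 'rV_m) :
  (x *m mxsub f f M *m x^T) 0 0 = ip M (comb f (fun a => x 0 a)) (comb f (fun a => x 0 a)).
Proof.
rewrite ip_combr mxE; apply: eq_bigr => b _.
rewrite ip_combl mxE big_distrl /= mulrC big_distrl /=; apply: eq_bigr => a _.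
by rewrite !mxE ip_ee; ring.
Qed.

Lemma comb_entry m (f : 'I_m -> 'I_k) c (j : 'I_k) :
  (comb f c) 0 j = \sum_a c a * (f a == j)%:R.
Proof.
rewrite /comb summxE; apply: eq_bigr => a _; by rewrite /ev !mxE eqxx /= eq_sym.
Qed.

Lemma comb_entry_inj m (f : 'I_m -> 'I_k) c a :
  injective f -> (comb f c) 0 (f a) = c a.
Proof.
move=> fi; rewrite comb_entry (bigD1 a) //= eqxx mulr1 big1 ?addr0 //.
by move=> b hb; rewrite (inj_eq fi) (negbTE hb) mulr0.
Qed.

Lemma comb_entry_out m (f : 'I_m -> 'I_k) c j :
  (forall a, f a != j) -> (comb f c) 0 j = 0.
Proof.
by move=> h; rewrite comb_entry big1 // => a _; rewrite (negbTE (h a)) mulr0.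
Qed.

Lemma ev_entry (i j : 'I_k) : (ev i) 0 j = (i == j)%:R.
Proof. by rewrite /ev !mxE eqxx /= eq_sym. Qed.

Hypothesis PD : posdef M.

Lemma ip_ge0 v : 0 <= ip M v v.
Proof.
have [->|nz] := eqVneq v 0; first by rewrite ip0l.
by apply: ltW; case: PD => _ h; exact: h.
Qed.

Lemma ip_eq0 v : ip M v v = 0 -> v = 0.
Proof.
move=> h; apply/eqP; apply: contraT => nz.
by case: PD => _ /(_ _ nz); rewrite -/(ip M v v) h ltxx.
Qed.

Lemma Msym i j : M i j = M j i.
Proof. by case: PD => hs _; rewrite -[in LHS]hs mxE. Qed.

Lemma sub_unit m (f : 'I_m -> 'I_k) : injective f -> mxsub f f M \in unitmx.
Proof.
move=> fi; rewrite unitmxE unitfE; apply/negP => /det0P [v nz hv].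
have := quad_sub f v; rewrite hv mul0mx mxE => /esym /ip_eq0 h.
move/eqP: nz; apply; apply/rowP => a.
by rewrite mxE -(comb_entry_inj (fun a => v 0 a) a fi) h mxE.
Qed.

Lemma lpcoef_eqn m (f : 'I_m -> 'I_k) (i : 'I_k) (x : 'cV_m) :
  mxsub f f M *m x = mxsub f (fun _ : 'I_1 => i) M <->
  (forall a, ip M (ev i - comb f (fun b => x b 0)) (ev (f a)) = 0).
Proof.
split=> [/matrixP h a | h].
  have := h a 0; rewrite /mxsub !mxE => e.
  rewrite ipBl ip_ee ip_combl Msym -e; apply/eqP; rewrite subr_eq0; apply/eqP.
  by apply: eq_bigr => b _; rewrite ip_ee mxE Msym mulrC.
apply/matrixP => a z; rewrite (ord1 z) /mxsub !mxE.
have := h a; rewrite ipBl ip_ee ip_combl => /eqP; rewrite subr_eq0 => /eqP.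
rewrite Msym => ->.
by apply: eq_bigr => b _; rewrite ip_ee mxE Msym mulrC.
Qed.

Lemma lpcoef_spec m (f : 'I_m -> 'I_k) i a : injective f ->
  ip M (ev i - comb f (fun b => lpcoef M f i b 0)) (ev (f a)) = 0.
Proof.
move=> fi; move: a; apply/lpcoef_eqn; rewrite /lpcoef mulKVmx //.
exact: sub_unit.
Qed.

Lemma lpcoef_char m (f : 'I_m -> 'I_k) i (x : 'cV_m) : injective f ->
  (forall a, ip M (ev i - comb f (fun b => x b 0)) (ev (f a)) = 0) ->
  lpcoef M f i = x.
Proof.
move=> fi /lpcoef_eqn h; rewrite /lpcoef -h mulKmx //; exact: sub_unit.
Qed.

Lemma explvarE m (f : 'I_m -> 'I_k) i :
  explvar M f i = ip M (comb f (fun b => lpcoef M f i b 0)) (ev i).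
Proof.
rewrite /explvar -mulmxA -/(lpcoef M f i) mxE ip_combl.
by apply: eq_bigr => a _; rewrite ip_ee !mxE Msym mulrC.
Qed.


Lemma ipS : forall u v, ip M u v = ip M v u.
Proof. by case: PD => h _; exact: ip_sym. Qed.

Lemma cs u v : ip M u v ^+ 2 <= ip M u u * ip M v v.
Proof.
have [h0|hne] := eqVneq (ip M u u) 0.
  by rewrite (ip_eq0 h0) ip0l ip0l expr0n /= mul0r.
have ha : 0 < ip M u u by rewrite lt_def hne ip_ge0.
have := ip_ge0 (ip M u u *: v - ip M u v *: u).
rewrite !ipBl !ipBr !ipZl !ipZr (ipS v u) => h.
nra.
Qed.

End IP.
Arguments ev {R k}.

Section SSpace.
Variable R : realType.
Variable n : nat.
Variable S : 'M[R]_n.+2.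
Hypothesis PD : posdef S.

Lemma oW_inj : injective (@oW n).
Proof. by move=> a b /lift_inj /lift_inj. Qed.
Lemma oW_neq_oX j : oW j != oX n.
Proof. by apply/eqP => /lift_inj. Qed.
Lemma oW_neq_oY j : oW j != oY n.
Proof. by []. Qed.
Lemma oX_neq_oY : oX n != oY n.
Proof. by []. Qed.

Definition gam j := lpcoef S (@oW n) (oX n) j 0.
Definition del j := lpcoef S (@oW n) (oY n) j 0.
Definition PX := comb (@oW n) gam.
Definition PY := comb (@oW n) del.
Fact uu_key : unit. Proof. exact: tt. Qed.
Definition uu := locked_with uu_key (ev (oX n) - PX).
Fact yy_key : unit. Proof. exact: tt. Qed.
Definition yy := locked_with yy_key (ev (oY n) - PY).
Lemma uuE : uu = ev (oX n) - PX. Proof. by rewrite /uu unlock. Qed.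
Lemma yyE : yy = ev (oY n) - PY. Proof. by rewrite /yy unlock. Qed.
Definition G := ip S PX PX.
Definition sxx := ip S uu uu.
Definition syy := ip S yy yy.
Definition sxy := ip S uu yy.

Lemma uu_orth j : ip S uu (ev (oW j)) = 0.
Proof. rewrite uuE; exact: (lpcoef_spec PD (oX n) j oW_inj). Qed.
Lemma yy_orth j : ip S yy (ev (oW j)) = 0.
Proof. rewrite yyE; exact: (lpcoef_spec PD (oY n) j oW_inj). Qed.
Lemma uu_PX : ip S uu PX = 0.
Proof. exact: orth_comb uu_orth. Qed.
Lemma yy_PX : ip S yy PX = 0.
Proof. exact: orth_comb yy_orth. Qed.
Lemma uu_PY : ip S uu PY = 0.
Proof. exact: orth_comb uu_orth. Qed.
Lemma yy_PY : ip S yy PY = 0.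
Proof. exact: orth_comb yy_orth. Qed.
Lemma evX : ev (oX n) = uu + PX.
Proof. by rewrite uuE subrK. Qed.
Lemma evY : ev (oY n) = yy + PY.
Proof. by rewrite yyE subrK. Qed.

Lemma SXX : S (oX n) (oX n) = sxx + G.
Proof.
rewrite -ip_ee evX ipDl !ipDr uu_PX (ipS PD PX uu) uu_PX.
by rewrite /sxx /G; ring.
Qed.
Lemma SYY : S (oY n) (oY n) = syy + ip S PY PY.
Proof.
rewrite -ip_ee evY ipDl !ipDr yy_PY (ipS PD PY yy) yy_PY.
by rewrite /syy; ring.
Qed.

Lemma explvarX : explvar S (@oW n) (oX n) = G.
Proof.
rewrite explvarE // -/gam -/PX evX ipDr (ipS PD PX uu) uu_PX add0r //.
Qed.
Lemma explvarY : explvar S (@oW n) (oY n) = ip S PY PY.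
Proof.
rewrite explvarE // -/del -/PY evY ipDr (ipS PD PY yy) yy_PY add0r //.
Qed.

Lemma resvarX : resvar S (@oW n) (oX n) = sxx.
Proof. by rewrite /resvar explvarX SXX addrK. Qed.
Lemma resvarY : resvar S (@oW n) (oY n) = syy.
Proof. by rewrite /resvar explvarY SYY addrK. Qed.
Lemma rsqX : rsq S (@oW n) (oX n) = G / (sxx + G).
Proof. by rewrite /rsq explvarX SXX. Qed.

Lemma uu_entryX : uu 0 (oX n) = 1.
Proof.
rewrite uuE mxE ev_entry mxE /PX comb_entry_out ?eqxx ?oppr0 ?addr0 //; exact: oW_neq_oX.
Qed.
Lemma uu_entryY : uu 0 (oY n) = 0.
Proof.
by rewrite uuE mxE ev_entry mxE /PX comb_entry_out ?oppr0 ?addr0.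
Qed.
Lemma yy_entryY : yy 0 (oY n) = 1.
Proof.
by rewrite yyE mxE ev_entry mxE /PY comb_entry_out ?eqxx ?oppr0 ?addr0.
Qed.

Lemma sxx_gt0 : 0 < sxx.
Proof.
rewrite lt_def ip_ge0 // andbT; apply/eqP => /(ip_eq0 PD) h.
by have := uu_entryX; rewrite h mxE => /eqP; rewrite eq_sym oner_eq0.
Qed.
Lemma syy_gt0 : 0 < syy.
Proof.
rewrite lt_def ip_ge0 // andbT; apply/eqP => /(ip_eq0 PD) h.
by have := yy_entryY; rewrite h mxE => /eqP; rewrite eq_sym oner_eq0.
Qed.
Lemma G_ge0 : 0 <= G.
Proof. exact: ip_ge0. Qed.

Lemma G_gt0 : mxsub (@oW n) (fun _ : 'I_1 => oX n) S != 0 -> 0 < G.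
Proof.
move=> hc; rewrite lt_def G_ge0 andbT; apply/eqP => /(ip_eq0 PD) h.
move/eqP: hc; apply; apply/matrixP => j z; rewrite /mxsub !mxE.
rewrite -ip_ee evX ipDr h ip0r addr0 (ipS PD) uu_orth //.
Qed.

Lemma cs_strict : sxy ^+ 2 < sxx * syy.
Proof.
set v := sxy *: uu - sxx *: yy.
have hv : v != 0.
  apply/negP => /eqP h.
  have := congr1 (fun w : 'rV_ _ => w 0 (oY n)) h.
  rewrite /= /v !mxE uu_entryY yy_entryY mulr0 mulr1 sub0r => /eqP.
  by rewrite oppr_eq0 (gt_eqF sxx_gt0).
have : 0 < ip S v v by case: PD => _; apply.
rewrite /v !ipBl !ipBr !ipZl !ipZr (ipS PD yy uu) -/sxx -/syy -/sxy => h.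
have hx := sxx_gt0; nra.
Qed.

Lemma beta_medE : beta_med S = sxy / sxx.
Proof.
set x := lpcoef S (@oXW n) (oY n).
have hi : injective (@oXW n) by move=> a b /lift_inj.
have sp := lpcoef_spec PD (oY n) _ hi; rewrite -/x in sp.
set r := ev (oY n) - comb (@oXW n) (fun b => x b 0) in sp.
have rW : forall j, ip S r (ev (oW j)) = 0 by move=> j; exact: (sp (lift ord0 j)).
have ru : ip S r uu = 0.
  by rewrite uuE ipBr (sp ord0) (orth_comb _ rW) subr0.
move: ru; rewrite /r ipBl ip_combl big_ord_recl /=.
rewrite -/(oX n) evX evY !ipDl (ipS PD PY uu) uu_PY (ipS PD PX uu) uu_PX.
rewrite big1; last by move=> j _; rewrite (ipS PD) uu_orth mulr0.
rewrite (ipS PD yy uu) -/sxy -/sxx !addr0 => /eqP; rewrite subr_eq0 => /eqP ->.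
rewrite /beta_med -/x mulfK //; exact: lt0r_neq0 sxx_gt0.
Qed.

End SSpace.
Lemma entry_lin (R : realType) k (a b : R) (u w : 'rV[R]_k) j :
  (a *: u - b *: w) 0 j = a * u 0 j - b * w 0 j.
Proof. by rewrite !mxE. Qed.

Section Lift.
Variable R : realType.
Variable n : nat.

Definition Ext : 'M[R]_(n.+2, n.+3) := \matrix_(i, j) (ext i == j)%:R.
Definition liftv (v : 'rV[R]_n.+2) : 'rV[R]_n.+3 := v *m Ext.

Lemma ext_inj : injective (@ext n).
Proof. by move=> a b /(congr1 val) /= /val_inj. Qed.
Lemma ext_neq_max i : @ext n i != eW2 n.
Proof. by rewrite -(inj_eq val_inj) /= neq_ltn ltn_ord. Qed.
Lemma eW_inj : injective (@eW n).
Proof. by move=> a b /ext_inj /oW_inj. Qed.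
Lemma eW_neq j : @eW n j != eW2 n.
Proof. exact: ext_neq_max. Qed.

Lemma lift_ev i : liftv (ev i) = ev (ext i).
Proof.
apply/rowP => j; rewrite /liftv /ev -(rowE i Ext) !mxE eqxx /=.
by rewrite eq_sym.
Qed.

Lemma liftD u v : liftv (u + v) = liftv u + liftv v.
Proof. exact: mulmxDl. Qed.
Lemma liftB u v : liftv (u - v) = liftv u - liftv v.
Proof. by rewrite /liftv mulmxBl. Qed.

Lemma lift_comb m (f : 'I_m -> 'I_n.+2) c : liftv (comb f c) = comb (fun a => ext (f a)) c.
Proof.
rewrite /liftv /comb mulmx_suml; apply: eq_bigr => a _.
by rewrite -scalemxAl -/(liftv _) lift_ev.
Qed.

Lemma lift_entry_max v : (liftv v) 0 (eW2 n) = 0.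
Proof.
rewrite /liftv mxE big1 // => k _; rewrite mxE (negbTE (ext_neq_max k)) mulr0 //.
Qed.

Lemma ip_lift (S : 'M[R]_n.+2) (St : 'M[R]_n.+3) :
  (forall i j, St (ext i) (ext j) = S i j) ->
  forall v w, ip St (liftv v) (liftv w) = ip S v w.
Proof.
move=> he v w.
have e : forall x : 'rV[R]_n.+2, x = comb id (fun j => x 0 j) by move=> x; exact: row_sum_delta.
have -> : liftv v = comb (@ext n) (fun j => v 0 j) by rewrite {1}(e v) lift_comb.
have -> : liftv w = comb (@ext n) (fun j => w 0 j) by rewrite {1}(e w) lift_comb.
rewrite {2}(e v) {2}(e w) !ip_combl.
apply: eq_bigr => a _; rewrite !ip_combr; congr (_ * _); apply: eq_bigr => b _.
by rewrite !ip_ee he.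
Qed.

End Lift.

Section StSpace.
Variable R : realType.
Variable n : nat.
Variable S : 'M[R]_n.+2.
Hypothesis PD : posdef S.
Variable St : 'M[R]_n.+3.
Hypothesis PDt : posdef St.
Hypothesis hext : forall i j, St (ext i) (ext j) = S i j.
Hypothesis h1 : St (eW2 n) (eW2 n) = 1.

Definition PXt := liftv (PX S).
Definition PYt := liftv (PY S).
Definition ut := liftv (uu S).
Definition yt := liftv (yy S).
Definition aa j := lpcoef St (@eW n) (eW2 n) j 0.
Definition PW2 := comb (@eW n) aa.
Fact e2_key : unit. Proof. exact: tt. Qed.
Definition e2 := locked_with e2_key (ev (eW2 n) - PW2).
Lemma e2E : e2 = ev (eW2 n) - PW2. Proof. by rewrite /e2 unlock. Qed.

Definition AA := ip St PW2 PW2.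
Definition mm := ip St PXt PW2.
Definition sxe := ip St ut e2.
Definition sye := ip St yt e2.
Definition see := ip St e2 e2.

Lemma evW j : @ev R _ (@eW n j) = liftv (ev (oW j)).
Proof. by rewrite lift_ev. Qed.

Lemma ut_orth j : ip St ut (ev (eW j)) = 0.
Proof. by rewrite evW (ip_lift hext) (uu_orth PD). Qed.
Lemma yt_orth j : ip St yt (ev (eW j)) = 0.
Proof. by rewrite evW (ip_lift hext) (yy_orth PD). Qed.
Lemma e2_orth j : ip St e2 (ev (eW j)) = 0.
Proof. rewrite e2E; apply: (lpcoef_spec PDt (eW2 n) j); exact: eW_inj. Qed.

Lemma PXtE : PXt = comb (@eW n) (gam S).
Proof. by rewrite /PXt /PX lift_comb. Qed.
Lemma PYtE : PYt = comb (@eW n) (del S).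
Proof. by rewrite /PYt /PY lift_comb. Qed.

Lemma evXt : @ev R _ (ext (oX n)) = ut + PXt.
Proof. by rewrite -lift_ev (evX S) liftD. Qed.
Lemma evYt : @ev R _ (ext (oY n)) = yt + PYt.
Proof. by rewrite -lift_ev (evY S) liftD. Qed.
Lemma evW2 : @ev R _ (eW2 n) = e2 + PW2.
Proof. by rewrite e2E subrK. Qed.

Lemma ut_W c : ip St ut (comb (@eW n) c) = 0.
Proof. exact: orth_comb ut_orth. Qed.
Lemma yt_W c : ip St yt (comb (@eW n) c) = 0.
Proof. exact: orth_comb yt_orth. Qed.
Lemma e2_W c : ip St e2 (comb (@eW n) c) = 0.
Proof. exact: orth_comb e2_orth. Qed.

Lemma sxxt : ip St ut ut = sxx S.
Proof. exact: (ip_lift hext). Qed.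
Lemma syyt : ip St yt yt = syy S.
Proof. exact: (ip_lift hext). Qed.
Lemma sxyt : ip St ut yt = sxy S.
Proof. exact: (ip_lift hext). Qed.
Lemma Gt : ip St PXt PXt = G S.
Proof. exact: (ip_lift hext). Qed.

Lemma seeE : see = 1 - AA.
Proof.
rewrite /see {1}e2E ipBl (ipS PDt PW2 e2) e2_W subr0 e2E ipBr ip_ee h1.
by rewrite evW2 ipDl e2_W add0r.
Qed.

Lemma see_gt0 : 0 < see.
Proof.
rewrite lt_def ip_ge0 // andbT; apply/eqP => /(ip_eq0 PDt) h.
have := congr1 (fun w : 'rV_ _ => w 0 (eW2 n)) h; rewrite /= e2E mxE ev_entry eqxx.
rewrite mxE /PW2 comb_entry_out ?oppr0 ?addr0 ?mxE => [/eqP|a]; first by rewrite oner_eq0.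
exact: eW_neq.
Qed.

Lemma AA_ge0 : 0 <= AA.
Proof. exact: ip_ge0. Qed.

Lemma R_W2W1E : R_W2W1 St = Num.sqrt AA.
Proof.
rewrite /R_W2W1 h1 divr1 -mulmxA -/(lpcoef St (@eW n) (eW2 n)) mxE; congr Num.sqrt.
have -> : AA = ip St PW2 (ev (eW2 n)) by rewrite evW2 ipDr (ipS PDt PW2 e2) e2_W add0r.
rewrite /PW2 ip_combl; apply: eq_bigr => a _.
by rewrite ip_ee [in RHS]mulrC /aa; congr (_ * _); rewrite /mxsub !mxE.
Qed.



Lemma eWW_widen j : @eWW n (widen_ord (leqnSn n) j) = eW j.
Proof. exact: val_inj. Qed.
Lemma eWW_max : @eWW n ord_max = eW2 n.
Proof. exact: val_inj. Qed.
Lemma eXWW0 : @eXWW n ord0 = ext (oX n).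
Proof. exact: val_inj. Qed.
Lemma eXWW_W j : @eXWW n (lift ord0 (widen_ord (leqnSn n) j)) = eW j.
Proof. exact: val_inj. Qed.
Lemma eXWW_max : @eXWW n (lift ord0 ord_max) = eW2 n.
Proof. exact: val_inj. Qed.
Lemma eWW_inj : injective (@eWW n).
Proof. by move=> a b /lift_inj /lift_inj. Qed.
Lemma eXWW_inj : injective (@eXWW n).
Proof. by move=> a b /lift_inj. Qed.

Definition QQ := comb (@eW n) (fun a => (pi1 St)^T 0 a).

Lemma quadE : ((pi1 St)^T *m mxsub (@eW n) (@eW n) St *m pi1 St) 0 0 = ip St QQ QQ.
Proof. by rewrite -quad_sub trmxK. Qed.

Lemma PW2_e2 : ip St PW2 e2 = 0.
Proof. by rewrite (ipS PDt) e2_W. Qed.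
Lemma PXt_e2 : ip St PXt e2 = 0.
Proof. by rewrite (ipS PDt) PXtE e2_W. Qed.
Lemma PYt_e2 : ip St PYt e2 = 0.
Proof. by rewrite (ipS PDt) PYtE e2_W. Qed.
Lemma QQ_e2 : ip St QQ e2 = 0.
Proof. by rewrite (ipS PDt) e2_W. Qed.
Lemma W2_e2 : ip St (ev (eW2 n)) e2 = see.
Proof. by rewrite evW2 ipDl PW2_e2 addr0. Qed.

Lemma pi_facts :
  pi2 St * see = sxe /\
  ((pi1 St)^T *m mxsub (@eW n) (@eW n) St *m pi1 St) 0 0
    = G S - 2 * pi2 St * mm + pi2 St ^+ 2 * AA.
Proof.
set x := lpcoef St (@eWW n) (ext (oX n)).
have sp := lpcoef_spec PDt (ext (oX n)) _ (@eWW_inj); rewrite -/x in sp.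
set r := ev (ext (oX n)) - comb (@eWW n) (fun b => x b 0) in sp.
have rW j : ip St r (ev (eW j)) = 0 by rewrite -eWW_widen; exact: sp.
have rW2 : ip St r (ev (eW2 n)) = 0 by rewrite -eWW_max; exact: sp.
have split : comb (@eWW n) (fun b => x b 0) = QQ + pi2 St *: ev (eW2 n).
  rewrite /comb big_ord_recr /= eWW_max; congr (_ + _).
  by apply: eq_bigr => j _; rewrite eWW_widen !mxE.
have re2 : ip St r e2 = 0.
  by rewrite e2E ipBr rW2 (orth_comb _ rW) subr0.
have hpi : pi2 St * see = sxe.
  move: re2; rewrite /r split evXt !ipBl !ipDl ipZl W2_e2 PXt_e2 QQ_e2 -/sxe.
  by move=> /eqP; rewrite addr0 subr_eq0 => /eqP ->; rewrite add0r.
split=> //.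
set z := PXt - pi2 St *: PW2 - QQ.
have zW j : ip St z (ev (eW j)) = 0.
  have := rW j; rewrite /r split evXt evW2 /z.
  rewrite !ipBl !ipDl !ipZl !ipDl ut_orth e2_orth.
  move=> h; rewrite -[RHS]h; ring.
have zz : ip St z z = 0.
  rewrite {2}/z !ipBr ipZr PXtE /PW2 /QQ !(orth_comb _ zW); ring.
have hz := ip_eq0 PDt zz.
have hQ : QQ = PXt - pi2 St *: PW2.
  by apply/eqP; rewrite eq_sym -subr_eq0; apply/eqP.
rewrite quadE hQ !ipBl !ipBr !ipZl !ipZr Gt (ipS PDt PW2 PXt) -/mm -/AA; ring.
Qed.

Lemma beta_fact :
  sxy S * see - sye * sxe = beta_long St * (sxx S * see - sxe ^+ 2).
Proof.
set x := lpcoef St (@eXWW n) (ext (oY n)).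
have sp := lpcoef_spec PDt (ext (oY n)) _ (@eXWW_inj); rewrite -/x in sp.
set r := ev (ext (oY n)) - comb (@eXWW n) (fun b => x b 0) in sp.
have rW j : ip St r (ev (eW j)) = 0 by rewrite -eXWW_W; exact: sp.
have rW2 : ip St r (ev (eW2 n)) = 0 by rewrite -eXWW_max; exact: sp.
have rX : ip St r (ev (ext (oX n))) = 0 by rewrite -eXWW0; exact: sp.
have split : comb (@eXWW n) (fun b => x b 0) =
   x ord0 0 *: ev (ext (oX n)) + comb (@eW n) (fun j => x (lift ord0 (widen_ord (leqnSn n) j)) 0)
   + x (lift ord0 ord_max) 0 *: ev (eW2 n).
  rewrite /comb big_ord_recl big_ord_recr /= eXWW0 eXWW_max addrA; congr (_ + _ + _).
set c := x (lift ord0 ord_max) 0.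
set cw := (fun j => x (lift ord0 (widen_ord (leqnSn n) j)) 0).
have ru : ip St r ut = 0.
  have -> : ut = ev (ext (oX n)) - PXt by rewrite evXt addrK.
  by rewrite ipBr rX PXtE (orth_comb _ rW) subr0.
have re2 : ip St r e2 = 0.
  by rewrite e2E ipBr rW2 (orth_comb _ rW) subr0.
have W1u : ip St (comb (@eW n) cw) ut = 0 by rewrite (ipS PDt) ut_W.
have W1e : ip St (comb (@eW n) cw) e2 = 0 by rewrite (ipS PDt) e2_W.
move: ru re2; rewrite /r split evYt evXt evW2.
rewrite !ipBl !ipDl !ipZl !ipDl W1u W1e PYt_e2 PXt_e2 PW2_e2.
rewrite (ipS PDt PYt ut) PYtE ut_W (ipS PDt PXt ut) PXtE ut_W (ipS PDt PW2 ut) ut_W.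
rewrite (ipS PDt yt ut) (ipS PDt e2 ut) sxyt sxxt -/sxe -/sye -/see.
rewrite /beta_long -/x => h1' h2'.
have e1 : sxy S = x ord0 0 * sxx S + c * sxe.
  apply/eqP; rewrite -subr_eq0; apply/eqP; rewrite /c -[RHS]h1'; ring.
have e3 : sye = x ord0 0 * sxe + c * see.
  apply/eqP; rewrite -subr_eq0; apply/eqP; rewrite /c -[RHS]h2'; ring.
rewrite e1 e3; ring.
Qed.

Lemma D_gt0 : 0 < sxx S * see - sxe ^+ 2.
Proof.
set v := sxe *: ut - sxx S *: e2.
have hv : v != 0.
  apply/negP => /eqP h.
  have := congr1 (fun w : 'rV_ _ => w 0 (eW2 n)) h.
  rewrite /= /v entry_lin /ut lift_entry_max mxE e2E mxE ev_entry eqxx mxE /PW2 comb_entry_out.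
    rewrite mulr0 oppr0 addr0 mulr1 sub0r => /eqP.
    by rewrite oppr_eq0 (gt_eqF (sxx_gt0 PD)).
  exact: eW_neq.
have : 0 < ip St v v by case: PDt => _; apply.
rewrite /v !ipBl !ipBr !ipZl !ipZr (ipS PDt e2 ut) sxxt -/sxe -/see => h.
have hx := sxx_gt0 PD; nra.
Qed.

End StSpace.

Lemma comb_scale (R : realType) k m (f : 'I_m -> 'I_k) (c : R) (g : 'I_m -> R) :
  comb f (fun a => c * g a) = c *: comb f g.
Proof. by rewrite /comb scaler_sumr; apply: eq_bigr => a _; rewrite scalerA. Qed.

Lemma ip_delta (R : realType) k (a b : 'rV[R]_k) i :
  (a *m delta_mx i i *m b^T) 0 0 = a 0 i * b 0 i.
Proof.
have -> : a *m delta_mx i i = a 0 i *: delta_mx 0 i.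
  apply/matrixP => z l; rewrite (ord1 z) !mxE (bigD1 i) //= big1.
    by rewrite !mxE eqxx /= addr0.
  by move=> q /negbTE hq; rewrite mxE hq mulr0.
by rewrite -scalemxAl -(rowE i (b^T)) !mxE.
Qed.

Section Constr.
Variable R : realType.
Variable n : nat.
Variable S : 'M[R]_n.+2.
Hypothesis PD : posdef S.
Variables c1 c2 c3 v : R.
Hypothesis v_gt0 : 0 < v.
Definition ww := c1 *: PX S + c2 *: uu S + c3 *: yy S.
Hypothesis hw : ip S ww ww + v = 1.

Definition Fm : 'M[R]_(n.+3, n.+2) :=
  \matrix_(i, j) (if unlift (eW2 n) i is Some i' then (i' == j)%:R else ww 0 j).
Definition StC := Fm *m S *m Fm^T + v *: delta_mx (eW2 n) (eW2 n).

Lemma ext_lift i : @ext n i = lift (eW2 n) i.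
Proof. by apply: val_inj; rewrite /= /bump ltnNge -ltnS ltn_ord. Qed.

Lemma ipC a b : ip StC a b = ip S (a *m Fm) (b *m Fm) + v * (a 0 (eW2 n) * b 0 (eW2 n)).
Proof.
rewrite /ip /StC mulmxDr mulmxDl mxE; congr (_ + _).
  by rewrite trmx_mul !mulmxA.
by rewrite -scalemxAr -scalemxAl mxE ip_delta.
Qed.

Lemma Fm_row k : ev k *m Fm = (if unlift (eW2 n) k is Some i' then ev i' else ww).
Proof.
rewrite /ev -(rowE k Fm); apply/rowP => j; rewrite !mxE.
case: (unlift _ k) => [i'|]; first by rewrite !mxE eqxx /= eq_sym.
by rewrite /ww !mxE.
Qed.

Lemma Fm_ext i : ev (@ext n i) *m Fm = ev i.
Proof. by rewrite Fm_row ext_lift liftK. Qed.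
Lemma Fm_W2 : ev (eW2 n) *m Fm = ww.
Proof. by rewrite Fm_row unlift_none. Qed.

Lemma Fm_lift x : liftv x *m Fm = x.
Proof.
have e : forall y : 'rV[R]_n.+2, y = comb id (fun j => y 0 j) by move=> y; exact: row_sum_delta.
rewrite {1}(e x) lift_comb /comb mulmx_suml [RHS](e x) /comb.
by apply: eq_bigr => a _; rewrite -scalemxAl Fm_ext.
Qed.

Lemma Fm_comb m (f : 'I_m -> 'I_n.+2) c : comb (fun a => ext (f a)) c *m Fm = comb f c.
Proof. by rewrite -lift_comb Fm_lift. Qed.

Lemma ev_max_ext i : (ev (@ext n i) : 'rV[R]_n.+3) 0 (eW2 n) = 0.
Proof. by rewrite ev_entry (negbTE (ext_neq_max i)). Qed.

Lemma Fm_entry (a : 'rV[R]_n.+3) i :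
  (a *m Fm) 0 i = a 0 (lift (eW2 n) i) + a 0 (eW2 n) * ww 0 i.
Proof.
rewrite mxE big_ord_recr /= mxE; congr (_ + _); last first.
  by rewrite -/(eW2 n) unlift_none.
have hl : forall i : 'I_n.+2, widen_ord (leqnSn n.+2) i = lift (eW2 n) i := ext_lift.
rewrite (bigD1 i) //= mxE hl liftK eqxx mulr1 big1 ?addr0 //.
by move=> j hj; rewrite mxE hl liftK (negbTE hj) mulr0.
Qed.

Lemma StC_ext i j : StC (ext i) (ext j) = S i j.
Proof.
by rewrite -(ip_ee StC) ipC !Fm_ext !ev_max_ext mulr0 mulr0 addr0 ip_ee.
Qed.

Lemma StC_W2 : StC (eW2 n) (eW2 n) = 1.
Proof. by rewrite -(ip_ee StC) ipC Fm_W2 ev_entry eqxx mulr1 mulr1. Qed.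

Lemma StC_pd : posdef StC.
Proof.
split.
  rewrite /StC linearD /= !trmx_mul trmxK linearZ /= trmx_delta.
  by case: PD => -> _; rewrite mulmxA.
move=> a anz; rewrite -/(ip StC a a) ipC.
have [hm|hm] := eqVneq (a 0 (eW2 n)) 0.
  rewrite hm mulr0 mulr0 addr0 lt_def ip_ge0 // andbT.
  apply/eqP => /(ip_eq0 PD) h0; move/eqP: anz; apply; apply/rowP => k.
  case: (unliftP (eW2 n) k) => [i ->|->]; last by rewrite hm mxE.
  have := Fm_entry a i; rewrite h0 hm mul0r addr0 !mxE => <- //.
apply: (@lt_le_trans _ _ (v * (a 0 (eW2 n) * a 0 (eW2 n)))).
  by apply: mulr_gt0 => //; rewrite -expr2 lt_def sqrf_eq0 hm sqr_ge0.
by rewrite lerDr ip_ge0.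
Qed.

Lemma hextC : forall i j, StC (ext i) (ext j) = S i j.
Proof. exact: StC_ext. Qed.

Lemma PW2C : PW2 StC = c1 *: PXt S.
Proof.
have hx : lpcoef StC (@eW n) (eW2 n) = \col_j (c1 * gam S j).
  apply: (lpcoef_char StC_pd (@eW_inj n)) => a.
  have -> : comb (@eW n) (fun b => (\col_j (c1 * gam S j)) b 0) = c1 *: PXt S.
    rewrite PXtE -comb_scale; apply: eq_bigr => b _; by rewrite mxE.
  rewrite ipC mulmxBl Fm_W2 -scalemxAl /PXt Fm_lift Fm_ext ev_max_ext !mulr0 addr0.
  rewrite /ww ipBl !ipDl !ipZl (uu_orth PD) (yy_orth PD); ring.
rewrite /PW2 /aa hx PXtE -comb_scale; apply: eq_bigr => b _; by rewrite mxE.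
Qed.

Lemma AAC : AA StC = c1 ^+ 2 * G S.
Proof. by rewrite /AA PW2C ipZl ipZr (Gt hextC); ring. Qed.
Lemma mmC : mm S StC = c1 * G S.
Proof. by rewrite /mm PW2C ipZr (Gt hextC). Qed.

Lemma ww_uu : ip S (uu S) ww = c2 * sxx S + c3 * sxy S.
Proof.
by rewrite /ww !ipDr !ipZr (uu_PX PD) mulr0 add0r.
Qed.
Lemma ww_yy : ip S (yy S) ww = c2 * sxy S + c3 * syy S.
Proof.
by rewrite /ww !ipDr !ipZr (yy_PX PD) mulr0 add0r (ipS PD (yy S)).
Qed.

Lemma sxeC : sxe S StC = c2 * sxx S + c3 * sxy S.
Proof.
rewrite /sxe e2E ipBr PW2C ipZr PXtE (ut_W PD hextC) mulr0 subr0.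
by rewrite ipC /ut Fm_lift Fm_W2 lift_entry_max mul0r mulr0 addr0 ww_uu.
Qed.
Lemma syeC : sye S StC = c2 * sxy S + c3 * syy S.
Proof.
rewrite /sye e2E ipBr PW2C ipZr PXtE (yt_W PD hextC) mulr0 subr0.
by rewrite ipC /yt Fm_lift Fm_W2 lift_entry_max mul0r mulr0 addr0 ww_yy.
Qed.

End Constr.

Lemma wwE (R : realType) n (S : 'M[R]_n.+2) c1 c2 c3 : posdef S ->
  ip S (ww S c1 c2 c3) (ww S c1 c2 c3) =
  c1 ^+ 2 * G S + c2 ^+ 2 * sxx S + 2 * c2 * c3 * sxy S + c3 ^+ 2 * syy S.
Proof.
move=> PD; rewrite /ww !ipDl !ipDr !ipZl !ipZr.
rewrite (uu_PX PD) (yy_PX PD) (ipS PD _ (uu S)) (ipS PD _ (yy S)) (uu_PX PD) (yy_PX PD).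
rewrite (ipS PD (yy S) (uu S)) -/(G S) -/(sxx S) -/(syy S) -/(sxy S); ring.
Qed.
Section Arith.
Variable R : realType.

Lemma sq_le_abs (x y : R) : x ^+ 2 <= y ^+ 2 -> 0 <= y -> `|x| <= y.
Proof.
move=> h hy; rewrite leNgt; apply/negP => hl.
have hx0 : 0 <= `|x| := normr_ge0 x.
have : `|x| ^+ 2 = x ^+ 2 by rewrite real_normK // num_real.
nra.
Qed.

Lemma sqrt_le_sq (V y : R) : V <= y ^+ 2 -> 0 <= y -> Num.sqrt V <= y.
Proof.
move=> h hy; apply: (le_trans (ler_wsqrtr h)); by rewrite sqrtr_sqr ger0_norm.
Qed.

Lemma lower_arith (syy sxy G see A sxe sye mm pi2 beta D V r : R) :
  0 < syy -> 0 <= G -> 0 <= sxy -> 0 < see -> 0 <= A -> see = 1 - A -> 0 <= r ->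
  pi2 * see = sxe -> V = G - 2 * pi2 * mm + pi2 ^+ 2 * A -> mm ^+ 2 <= G * A ->
  Num.sqrt (pi2 ^+ 2 * 1) <= r * Num.sqrt V ->
  sxy * see - sye * sxe = beta * D -> 0 < D -> beta <= 0 -> sye ^+ 2 <= syy * see ->
  sxy ^+ 2 <= r ^+ 2 * (G * syy + sxy ^+ 2).
Proof.
move=> hyy hG hxy hsee hA hseeA hr hpi hV hm hrx hb hD hbeta hcs.
set t := `|pi2|.
have ht : 0 <= t := normr_ge0 _.
have ht2 : t ^+ 2 = pi2 ^+ 2 by rewrite real_normK // num_real.
set g := Num.sqrt G; set s := Num.sqrt A.
have hg : 0 <= g := sqrtr_ge0 _. have hs : 0 <= s := sqrtr_ge0 _.
have hg2 : g ^+ 2 = G by rewrite sqr_sqrtr.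
have hs2 : s ^+ 2 = A by rewrite sqr_sqrtr.
have hmm : `|pi2 * mm| <= t * (g * s).
  apply: sq_le_abs; last by rewrite mulr_ge0 // mulr_ge0.
  rewrite !exprMn ht2 hg2 hs2; apply: ler_wpM2l => //; exact: sqr_ge0.
have hmm' : - (pi2 * mm) <= t * (g * s).
  by apply: le_trans hmm; rewrite -normrN ler_norm.
have hVle : V <= (g + t * s) ^+ 2.
  rewrite hV -hg2 -hs2; nra.
have hsq : Num.sqrt V <= g + t * s.
  by apply: sqrt_le_sq => //; rewrite addr_ge0 // mulr_ge0.
have ht' : t <= r * (g + t * s).
  move: hrx; rewrite mulr1 sqrtr_sqr -/t => h; apply: le_trans h _.
  by apply: ler_wpM2l.
have hbD : sxy * see <= sye * sxe.
  have : beta * D <= 0 by rewrite mulr_le0_ge0 // ltW.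
  rewrite -hb; lra.
have hsxy0 : 0 <= sxy * see by rewrite mulr_ge0 // ltW.
have h1 : (sxy * see) ^+ 2 <= (sye * sxe) ^+ 2.
  apply: lerXn2r => //; rewrite nnegrE //; exact: le_trans hbD.
have h2 : (sye * sxe) ^+ 2 <= syy * see * sxe ^+ 2.
  rewrite exprMn; apply: ler_wpM2r => //; exact: sqr_ge0.
have h3 : sxy ^+ 2 <= syy * t ^+ 2 * see.
  have e : sxe ^+ 2 = t ^+ 2 * see ^+ 2 by rewrite -hpi exprMn ht2.
  have := le_trans h1 h2; rewrite e exprMn => h.
  have hsee2 : 0 < see ^+ 3 by rewrite exprn_gt0.
  rewrite -(@ler_pM2r _ (see ^+ 2)) ?exprn_gt0 //.
  by rewrite (_ : syy * t ^+ 2 * see * see ^+ 2 = syy * see * (t ^+ 2 * see ^+ 2)) //; ring.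
have hG0 : 0 <= G * syy by rewrite mulr_ge0 // ltW.
case: (lerP 1 r) => hr1.
  have : 1 <= r ^+ 2 by rewrite -(expr1n _ 2); apply: lerXn2r; rewrite ?nnegrE.
  have : 0 <= sxy ^+ 2 := sqr_ge0 _.
  nra.
have hs1 : s ^+ 2 < 1 by rewrite hs2; lra.
have hs1' : s <= 1 by rewrite leNgt; apply/negP => h; nra.
have hrs : 0 < 1 - r * s by nra.
have h4 : t * (1 - r * s) <= r * g by nra.
have h5 : t ^+ 2 * (1 - r * s) ^+ 2 <= r ^+ 2 * G.
  rewrite -hg2 -exprMn -exprMn; apply: lerXn2r; rewrite ?nnegrE //.
    by rewrite mulr_ge0 // ltW.
  by rewrite mulr_ge0.
have h6 : (1 - s ^+ 2) * (1 - r ^+ 2) <= (1 - r * s) ^+ 2.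
  have : 0 <= (r - s) ^+ 2 := sqr_ge0 _. nra.
have hsee' : see = 1 - s ^+ 2 by rewrite hs2.
have h7 : sxy ^+ 2 * (1 - r ^+ 2) <= syy * (r ^+ 2 * G).
  apply: (le_trans (y := syy * t ^+ 2 * see * (1 - r ^+ 2))).
    by apply: ler_wpM2r => //; nra.
  rewrite hsee' -mulrA -mulrA; apply: ler_wpM2l; first exact: ltW.
  apply: le_trans h5; apply: ler_wpM2l; [exact: sqr_ge0 | exact: h6].
nra.
Qed.

Lemma constr_arith (sxx syy sxy G r : R) :
  0 < sxx -> 0 < syy -> 0 < sxy -> sxy ^+ 2 < sxx * syy -> 0 < G -> 0 <= r -> r < 1 ->
  (1 - r ^+ 2) * sxy ^+ 2 < r ^+ 2 * G * syy ->
  exists c1 c2 c3 v, [/\ 0 < v,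
    c1 ^+ 2 * G + c2 ^+ 2 * sxx + 2 * c2 * c3 * sxy + c3 ^+ 2 * syy + v = 1,
    sxy * (1 - c1 ^+ 2 * G) - (c2 * sxy + c3 * syy) * (c2 * sxx + c3 * sxy) <= 0,
    (forall p, p * (1 - c1 ^+ 2 * G) = c2 * sxx + c3 * sxy ->
       Num.sqrt (p ^+ 2 * 1) <= r * Num.sqrt (G - 2 * p * (c1 * G) + p ^+ 2 * (c1 ^+ 2 * G))) &
    0 <= Num.sqrt (c1 ^+ 2 * G) <= 1].
Proof.
move=> hxx hyy hxy hcs hG hr0 hr1 hrs.
have hr : 0 < r.
  rewrite lt_def hr0 andbT; apply/eqP => r0; move: hrs; rewrite r0.
  have : 0 < sxy ^+ 2 by rewrite exprn_gt0.
  by rewrite expr0n /= mul0r mul0r subr0 mul1r => h1 h2; lra.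
have hr2 : r ^+ 2 < 1 by nra.
set g := Num.sqrt G.
have hg : 0 < g by rewrite sqrtr_gt0.
have hg2 : g ^+ 2 = G by rewrite sqr_sqrtr // ltW.
set h := syy - sxy ^+ 2 / sxx.
have hh : 0 < h.
  rewrite /h subr_gt0 ltr_pdivrMr //; lra.
set T := sxx / sxy.
have hT : 0 < T by rewrite divr_gt0.
set F := r ^+ 2 * G * (sxy + T * h) - (1 - r ^+ 2) * sxy * sxx.
have hF : 0 < F.
  have -> : F = sxx / sxy * (r ^+ 2 * G * syy - (1 - r ^+ 2) * sxy ^+ 2).
    by rewrite /F /T /h; field; rewrite (gt_eqF hxy) (gt_eqF hxx).
  by rewrite mulr_gt0 // ?divr_gt0 // subr_gt0.
set k := T * (r ^+ 2 * G * h).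
have hk : 0 < k by rewrite mulr_gt0 // mulr_gt0 // mulr_gt0 // exprn_gt0.
set t := T * k / (k + F).
have ht : 0 < t by apply: divr_gt0; [exact: mulr_gt0 | exact: addr_gt0].
have htT : t < T.
  rewrite /t ltr_pdivrMr; last exact: addr_gt0.
  rewrite mulrDr ltrDl; exact: mulr_gt0.
have hft : (1 - r ^+ 2) * sxy * sxx <= r ^+ 2 * G * (sxy + t * h).
  have e : r ^+ 2 * G * (sxy + t * h) - (1 - r ^+ 2) * sxy * sxx = F ^+ 2 / (k + F).
    rewrite /t /k /F; field; rewrite -/k -/F; apply: lt0r_neq0; exact: addr_gt0.
  by rewrite -subr_ge0 e; apply: divr_ge0; [exact: sqr_ge0 | apply: ltW; exact: addr_gt0].
have hsth : 0 < sxy + t * h by rewrite addr_gt0 // mulr_gt0.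
set K := (1 - r ^+ 2) * sxy / (sxx * (sxy + t * h)).
have hK : 0 < K by rewrite divr_gt0 ?mulr_gt0 // subr_gt0.
set a := Num.sqrt K.
have ha : 0 < a by rewrite sqrtr_gt0.
have ha2 : a ^+ 2 = K by rewrite sqr_sqrtr // ltW.
have hv : 0 < t * a ^+ 2 * h * (sxx - sxy * t) / sxy.
  apply: divr_gt0 => //; apply: mulr_gt0; last first.
    by rewrite subr_gt0 -ltr_pdivlMl // mulrC -/T.
  by rewrite mulr_gt0 // mulr_gt0 // exprn_gt0.
have hc1 : (- (r / g)) ^+ 2 * G = r ^+ 2 :> R.
  by rewrite sqrrN expr_div_n hg2 divfK // gt_eqF.
have hc1' : - (r / g) * G = - (r * g).
  by rewrite -hg2 mulNr; congr (- _); field; rewrite gt_eqF.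
set c1 := - (r / g).
exists c1; exists (a - t * a * sxy / sxx); exists (t * a); exists (t * a ^+ 2 * h * (sxx - sxy * t) / sxy).
rewrite hc1 hc1'.
have e1 : (a - t * a * sxy / sxx) * sxx + t * a * sxy = a * sxx.
  by field; rewrite gt_eqF.
have e2 : (a - t * a * sxy / sxx) * sxy + t * a * syy = a * (sxy + t * h).
  by rewrite /h; field; rewrite gt_eqF.
rewrite e1 e2; split => //.
- have -> : r ^+ 2 + (a - t * a * sxy / sxx) ^+ 2 * sxx + 2 * (a - t * a * sxy / sxx) * (t * a) * sxy +
      (t * a) ^+ 2 * syy + t * a ^+ 2 * h * (sxx - sxy * t) / sxy =
      r ^+ 2 + a ^+ 2 * (sxx * (sxy + t * h) / sxy).
    by rewrite /h; field; rewrite (gt_eqF hxy) (gt_eqF hxx).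
  rewrite ha2 /K; field; rewrite (gt_eqF hxy) (gt_eqF hxx) (gt_eqF hsth) //.
- have -> : sxy * (1 - r ^+ 2) - a * (sxy + t * h) * (a * sxx) = 0.
    rewrite (_ : a * (sxy + t * h) * (a * sxx) = a ^+ 2 * (sxx * (sxy + t * h))); last by ring.
    rewrite ha2 /K; field; rewrite (gt_eqF hxx) (gt_eqF hsth) //.
  done.
- move=> p hp.
  have hp' : p = a * sxx / (1 - r ^+ 2).
    by rewrite -hp mulfK // gt_eqF // subr_gt0.
  have hp0 : 0 <= p by rewrite hp' divr_ge0 // ?mulr_ge0 ?ltW // subr_gt0.
  rewrite mulr1 sqrtr_sqr ger0_norm //.
  have -> : G - 2 * p * - (r * g) + p ^+ 2 * r ^+ 2 = (g + p * r) ^+ 2.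
    by rewrite -hg2; ring.
  rewrite sqrtr_sqr ger0_norm; last by rewrite addr_ge0 ?mulr_ge0 // ltW.
  have hax : a * sxx <= r * g.
    apply: (le_trans (ler_norm _)); apply: sq_le_abs; last by rewrite mulr_ge0 ?ltW.
    rewrite !exprMn ha2 hg2 /K.
    rewrite -(@ler_pM2r _ (sxx * (sxy + t * h) / sxy)); last by rewrite divr_gt0 // mulr_gt0.
    rewrite (_ : (1 - r ^+ 2) * sxy / (sxx * (sxy + t * h)) * sxx ^+ 2 * (sxx * (sxy + t * h) / sxy)
       = (1 - r ^+ 2) * sxx ^+ 2); last by field; rewrite (gt_eqF hxy) (gt_eqF hxx) (gt_eqF hsth).
    rewrite (_ : r ^+ 2 * G * (sxx * (sxy + t * h) / sxy) = sxx / sxy * (r ^+ 2 * G * (sxy + t * h))); last by field; rewrite (gt_eqF hxy).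
    rewrite (_ : (1 - r ^+ 2) * sxx ^+ 2 = sxx / sxy * ((1 - r ^+ 2) * sxy * sxx)); last by field; rewrite (gt_eqF hxy).
    by apply: ler_wpM2l => //; rewrite ltW // divr_gt0.
  have h' : p * (1 - r ^+ 2) <= r * g by rewrite hp.
  rewrite mulrDr; nra.
- rewrite sqrtr_sqr ger0_norm // hr0 /=; exact: ltW.
Qed.

End Arith.

Section Main.
Variable R : realType.
Variable n : nat.
Variable S : 'M[R]_n.+2.
Hypothesis PD : posdef S.

Lemma constr_BI (c1 c2 c3 v r : R) : 0 < v ->
  c1 ^+ 2 * G S + c2 ^+ 2 * sxx S + 2 * c2 * c3 * sxy S + c3 ^+ 2 * syy S + v = 1 ->
  sxy S * (1 - c1 ^+ 2 * G S) - (c2 * sxy S + c3 * syy S) * (c2 * sxx S + c3 * sxy S) <= 0 ->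
  (forall p, p * (1 - c1 ^+ 2 * G S) = c2 * sxx S + c3 * sxy S ->
     Num.sqrt (p ^+ 2 * 1) <= r * Num.sqrt (G S - 2 * p * (c1 * G S) + p ^+ 2 * (c1 ^+ 2 * G S))) ->
  0 <= Num.sqrt (c1 ^+ 2 * G S) <= 1 ->
  exists b, b <= 0 /\ B_I S r 0 1 b.
Proof.
move=> hv hsum hb hrx hc.
have hw : ip S (ww S c1 c2 c3) (ww S c1 c2 c3) + v = 1 by rewrite wwE.
set St := StC S c1 c2 c3 v.
have PDt : posdef St := StC_pd PD c1 c2 c3 hv.
have h1 : St (eW2 n) (eW2 n) = 1 := StC_W2 hw.
have hext : forall i j, St (ext i) (ext j) = S i j := hextC S c1 c2 c3 v.
have [hpi hquad] := pi_facts PD PDt hext.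
have hsee : see St = 1 - c1 ^+ 2 * G S by rewrite (seeE PDt h1) (AAC PD c1 c2 c3 hv).
exists (beta_long St); split; last first.
  exists St; split=> //; split=> //; split=> //; split; last split => //.
    rewrite /A_rx h1 hquad (mmC PD c1 c2 c3 hv) (AAC PD c1 c2 c3 hv); apply: hrx.
    by rewrite -hsee hpi (sxeC PD c1 c2 c3 hv).
  by rewrite /A_c (R_W2W1E PDt h1) (AAC PD c1 c2 c3 hv).
have hbf := beta_fact PD PDt hext.
have hD := D_gt0 PD PDt hext.
rewrite hsee (sxeC PD c1 c2 c3 hv) (syeC PD c1 c2 c3 hv) in hbf hD.
have : beta_long St * (sxx S * (1 - c1 ^+ 2 * G S) - (c2 * sxx S + c3 * sxy S) ^+ 2) <= 0.
  by rewrite -hbf.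
move=> h; nra.
Qed.

End Main.

Unset Implicit Arguments.

Theorem mainTheorem2 (R : realType) (n : nat) (S : 'M[R]_n.+2) :
  posdef S ->
  mxsub (@oW n) (fun _ : 'I_1 => oX n) S != 0 ->
  0 <= beta_med S ->
  rx_bp S =
  (Num.sqrt (R2_Y_X_W1 S / (R2_X_W1 S / (1 - R2_X_W1 S) + R2_Y_X_W1 S)))%:E.
Proof.
move=> PD hc hbm.
have hxx := sxx_gt0 PD; have hyy := syy_gt0 PD; have hG := G_gt0 PD hc.
have hcs := cs_strict PD.
have hxy : 0 <= sxy S.
  move: hbm; rewrite (beta_medE PD) => h.
  by rewrite -(divfK (lt0r_neq0 hxx) (sxy S)) mulr_ge0 // ltW.
have hGy : 0 < G S * syy S + sxy S ^+ 2 by rewrite ltr_wpDr ?sqr_ge0 // mulr_gt0.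
have -> : R2_Y_X_W1 S / (R2_X_W1 S / (1 - R2_X_W1 S) + R2_Y_X_W1 S)
    = sxy S ^+ 2 / (G S * syy S + sxy S ^+ 2).
  rewrite /R2_Y_X_W1 /R2_X_W1 (beta_medE PD) (resvarX PD) (resvarY PD) (rsqX PD).
  field.
  rewrite (lt0r_neq0 hGy) (lt0r_neq0 hyy) (lt0r_neq0 hxx) (lt0r_neq0 (addr_gt0 hxx hG)) /= addrK.
  apply: lt0r_neq0; apply: ltr_wpDr; first by rewrite mulr_ge0 ?sqr_ge0 ?ltW.
  by rewrite !mulr_gt0.
set Q := sxy S ^+ 2 / (G S * syy S + sxy S ^+ 2).
have hQ0 : 0 <= Q by rewrite divr_ge0 ?sqr_ge0 ?ltW.
have hQ1 : Q < 1.
  by rewrite ltr_pdivrMr // mul1r ltrDr mulr_gt0.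
apply/eqP; rewrite eq_le; apply/andP; split; last first.
  apply: le_ereal_inf_tmp => _ [r [hr0 [b [hb [St [hext [h1 [PDt [Arx [Ac hbl]]]]]]]]] <-].
  rewrite lee_fin.
  have [hpi hquad] := pi_facts PD PDt hext.
  have hmm : mm S St ^+ 2 <= G S * AA St.
    by rewrite /mm -(Gt hext) /AA; exact: cs.
  have hsy : sye S St ^+ 2 <= syy S * see St.
    by rewrite /sye -(syyt hext) /see; exact: cs.
  have hArx : Num.sqrt (pi2 St ^+ 2 * 1) <= r * Num.sqrt (G S - 2 * pi2 St * mm S St + pi2 St ^+ 2 * AA St).
    by move: Arx; rewrite /A_rx h1 hquad.
  have hb' : beta_long St <= 0 by rewrite hbl.
  have := lower_arith hyy (ltW hG) hxy (see_gt0 PDt) (AA_ge0 PDt) (seeE PDt h1) hr0 hpi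
    (erefl _) hmm hArx (beta_fact PD PDt hext) (D_gt0 PD PDt hext) hb' hsy.
  move=> hfin.
  have hQr : Q <= r ^+ 2 by rewrite ler_pdivrMr // mulrC.
  by rewrite -(ger0_norm hr0) -sqrtr_sqr ler_wsqrtr.
have [h0|hpos] := eqVneq (sxy S) 0.
  have -> : Q = 0 by rewrite /Q h0 expr0n /= mul0r.
  rewrite sqrtr0; apply: ge_ereal_inf; exists 0%:E => //; exists 0 => //; split => //.
  apply: (@constr_BI _ _ _ PD 0 0 0 1 0) => //.
  - by rewrite expr0n /= !mul0r !mulr0 !mul0r !add0r.
  - by rewrite h0 !mul0r !add0r mulr0 ?subr0.
  - move=> p; rewrite !mul0r add0r expr0n /= mul0r subr0 mulr1 => hp.
    by rewrite hp expr0n mul0r sqrtr0.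
  - by rewrite expr0n /= mul0r sqrtr0 lexx /= ler01.
have hxy' : 0 < sxy S by rewrite lt_def hpos hxy.
set rs := Num.sqrt Q.
have hrs0 : 0 <= rs := sqrtr_ge0 _.
have hrs1 : rs < 1 by rewrite /rs -sqrtr1 ltr_sqrt.
have hrs2 : rs ^+ 2 = Q by rewrite sqr_sqrtr.
apply/lee_addgt0Pr => e he.
set m := Num.min (rs + e) 1.
have hm1 : m <= rs + e by rewrite ge_min lexx.
have hm2 : m <= 1 by rewrite ge_min lexx orbT.
have hm3 : rs < m by rewrite lt_min hrs1 andbT ltrDl.
set r := (rs + m) / 2.
have hr1 : rs < r by rewrite /r; lra.
have hr2 : r < 1 by rewrite /r; lra.
have hr3 : r <= rs + e by rewrite /r; lra.
have hr0 : 0 <= r by lra.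
apply: (@le_trans _ _ r%:E); last by rewrite lee_fin.
apply: ge_ereal_inf; exists r%:E => //; exists r => //; split => //.
have hQr : Q < r ^+ 2 by rewrite -hrs2; apply: ltrXn2r => //; rewrite ?nnegrE.
have hcond : (1 - r ^+ 2) * sxy S ^+ 2 < r ^+ 2 * G S * syy S.
  move: hQr; rewrite /Q ltr_pdivrMr // => h; nra.
have [c1 [c2 [c3 [v [hv hsum hb hrx hcc]]]]] := constr_arith hxx hyy hxy' hcs hG hr0 hr2 hcond.
exact: (constr_BI PD hv hsum hb hrx hcc).
Qed.
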